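(* Fix reals $a<b$, $S=T\cap[a,b]$, a natural number $m\ge1$, points $q_1,\ldots,q_r\in\mathbf M$, and $-\infty\le\alpha_i\le\beta_i\le\infty$ ($i=1,\ldots,r$). Let $\Pi_1=\{x\in\mathbf M:\alpha_i\le\tau(x,q_i)\le\beta_i,\ i=1,\ldots,r\}$ and let $\mathbf\Pi\subseteq\Pi_1$. Fix $\ell$ and $a=u_1<\cdots<u_{\ell+1}=b$, and let $\mathcal A$ be a set of constraints satisfied by $(|C|,(x_i^{(k)}(C)))$ for every $S$-code $C\subset\mathbf\Pi$. Let $c^*(m)$ be the supremum of $c$ over real variables $c$, $(x_i^{(k)})_{1\le i\le\ell,0\le k\le 2m-1}$, $(y_i^{(k)})_{1\le i\le r,0\le k\le 2m-1}$ with $y_1^{(0)}=\cdots=y_r^{(0)}=c$, subject to: (7) $H_m(x_i^{(0)},\ldots,x_i^{(2m-1)},[u_i,u_{i+1}])\succeq0$, $i=1,\ldots,\ell$; (8) the constraints $\mathcal A$; (9) for $k=0,\ldots,2m-1$ the $(r+1)\times(r+1)$ symmetric matrix $G_k$ with entries $(G_k)_{ij}=\Phi_k(\tau(q_i,q_j))$ for $i,j\le r$, $(G_k)_{i,r+1}=(G_k)_{r+1,i}=\sum_{d=0}^k p_{kd}y_i^{(d)}$ for $i\le r$, and $(G_k)_{r+1,r+1}=c+\sum_{d=0}^k p_{kd}\sum_{i=1}^\ell x_i^{(d)}$, is positive semidefinite; (10) $H_m(y_i^{(0)},\ldots,y_i^{(2m-1)},[\alpha_i,\beta_i])\succeq0$,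 $i=1,\ldots,r$ (with the block $F_m^+(\alpha_i)$ omitted if $\alpha_i=-\infty$ and $F_m^-(\beta_i)$ omitted if $\beta_i=\infty$). Then $A(\mathbf\Pi,S)\le c^*(m)$.
   Context: $\mathbf M$ is a 2-point-homogeneous space with associated real function $\tau(x,y)$, $\tau_0:=\tau(x,x)$, $T=\{\tau(x,y):x,y\in\mathbf M\}$, and zonal spherical functions $\Phi_k(t)=\sum_{d=0}^k p_{kd}t^d$ assumed to be real polynomials of degree $k$ with $\Phi_k(\tau_0)=1$ such that for every finite $\{x_1,\ldots,x_N\}\subset\mathbf M$ and $k\ge0$ the matrix $(\Phi_k(\tau(x_i,x_j)))$ is positive semidefinite. An $S$-code is a finite $C\subset\mathbf M$ with $\tau(x,y)\in S$ for all distinct $x,y\in C$; $A(\mathbf\Pi,S)$ is the largest cardinality of an $S$-code contained in $\mathbf\Pi$. For an $S$-code $C=\{z_1,\ldots,z_c\}$, $x_i^{(k)}(C):=\sum\tau(z_p,z_q)^k$ over ordered pairs $p\ne q$ with $\tau(z_p,z_q)\in[u_i,u_{i+1})$ ($i<\ell$), resp. $\in[u_\ell,b]$ ($i=\ell$); $\tau^0:=1$. For reals $s_0,\ldots,s_{2m-1}$ and $\alpha<\beta$: $R_m=(s_{i+j-2})_{i,j=1}^m$, $F_m^+(\alpha)=(s_{i+j-1}-\alpha s_{i+j-2})$, $F_m^-(\beta)=(\beta s_{i+j-2}-s_{i+j-1})$, $H_m(s_0,\ldots,s_{2m-1},[\alpha,\beta])=\operatorname{diag}(R_m,F_m^+(\alpha),F_m^-(\beta))$.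 *)

(* Defs.v *)
From HB Require Import structures.
From mathcomp Require Import all_boot all_order all_algebra.
From mathcomp Require Import boolp classical_sets reals constructive_ereal ereal.
Set Implicit Arguments. Unset Strict Implicit. Unset Printing Implicit Defensive.
Import Order.TTheory GRing.Theory Num.Theory.
Local Open Scope ring_scope.
Local Open Scope classical_set_scope.

Section Defs.
Variable R : realType.

Definition psd n (A : 'M[R]_n) : Prop :=
  A^T = A /\ forall v : 'cV[R]_n, 0 <= (v^T *m A *m v) 0 0.

(* reading a finite sequence s_0,...,s_{n-1} at a natural index (0 outside) *)
Definition sget n (s : 'I_n -> R) (k : nat) : R := oapp s 0 (insub k).

Definition Rmx m (s : nat -> R) : 'M[R]_m := \matrix_(i < m, j < m) s (i + j)%N.
Definition Fplus m (s : nat -> R) (al : R) : 'M[R]_m :=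
  \matrix_(i < m, j < m) (s (i + j).+1 - al * s (i + j)%N).
Definition Fminus m (s : nat -> R) (be : R) : 'M[R]_m :=
  \matrix_(i < m, j < m) (be * s (i + j)%N - s (i + j).+1).

Definition Hmx m (s : nat -> R) (al be : R) : 'M[R]_(m + (m + m)) :=
  block_mx (Rmx m s) 0 0 (block_mx (Fplus m s al) 0 0 (Fminus m s be)).

Definition Hm_psd_ext m (s : nat -> R) (al be : \bar R) : Prop :=
  match al, be with
  | EFin x, EFin y => psd (Hmx m s x y)
  | EFin x, _ => psd (block_mx (Rmx m s) 0 0 (Fplus m s x))
  | _, EFin y => psd (block_mx (Rmx m s) 0 0 (Fminus m s y))
  | _, _ => psd (Rmx m s)
  end.

Variable M : Type.
Variable tau : M -> M -> R.

Definition two_point_homogeneous : Prop :=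
  forall x y x' y', tau x y = tau x' y' ->
    exists g : M -> M, bijective g /\ (forall v w, tau (g v) (g w) = tau v w)
                       /\ g x = x' /\ g y = y'.

Definition Tset : set R := [set t | exists x y, t = tau x y].
Definition Sset (a b : R) : set R := [set t | Tset t /\ a <= t <= b].

Definition Pi1 r (q : 'I_r -> M) (al be : 'I_r -> \bar R) : set M :=
  [set x | forall i, (al i <= (tau x (q i))%:E)%E /\ ((tau x (q i))%:E <= be i)%E].

(* A finite set C = {z_0,...,z_{N-1}} (z injective) which is an S-code in Pi *)
Definition Scode_in (a b : R) (Pi : set M) N (z : 'I_N -> M) : Prop :=
  injective z /\ (forall p, Pi (z p)) /\
  (forall p p', p != p' -> Sset a b (tau (z p) (z p'))).

Definition Acode (a b : R) (Pi : set M) : \bar R :=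
  ereal_sup [set (N%:R)%:E | N in [set N : nat | exists z : 'I_N -> M, Scode_in a b Pi z]].

(* interval number i (0-based, i < ell): [u_i,u_{i+1}) if i+1 < ell, [u_i,u_{i+1}] if i+1 = ell *)
Definition in_piece (ell : nat) (u : nat -> R) (i : nat) (t : R) : bool :=
  if (i.+1 < ell)%N then (u i <= t) && (t < u i.+1) else (u i <= t) && (t <= u i.+1).

Definition xmom (ell : nat) (u : nat -> R) N (z : 'I_N -> M) n (i : 'I_ell) (k : 'I_n) : R :=
  \sum_(p < N) \sum_(p' < N | (p != p') && in_piece ell u i (tau (z p) (z p')))
     tau (z p) (z p') ^+ k.

Definition Gmx (Phi : nat -> {poly R}) (k : nat) r (q : 'I_r -> M) ell n
  (c : R) (x : 'I_ell -> 'I_n -> R) (y : 'I_r -> 'I_n -> R) : 'M[R]_(r + 1) :=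
  block_mx (\matrix_(i < r, j < r) (Phi k).[tau (q i) (q j)])
           (\matrix_(i < r, j < 1) \sum_(d < k.+1) (Phi k)`_d * sget (y i) d)
           (\matrix_(i < 1, j < r) \sum_(d < k.+1) (Phi k)`_d * sget (y j) d)
           (\matrix_(i < 1, j < 1)
               (c + \sum_(d < k.+1) (Phi k)`_d * \sum_(i' < ell) sget (x i') d)).

Definition feasible_c (Phi : nat -> {poly R}) (m : nat) r (q : 'I_r -> M)
  (al be : 'I_r -> \bar R) (ell : nat) (u : nat -> R)
  (Acons : R -> ('I_ell -> 'I_(2 * m) -> R) -> Prop) : set R :=
  [set c | exists (x : 'I_ell -> 'I_(2 * m) -> R) (y : 'I_r -> 'I_(2 * m) -> R),
     (forall i, sget (y i) 0 = c) /\
     (forall i : 'I_ell, psd (Hmx m (sget (x i)) (u i) (u i.+1))) /\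
     Acons c x /\
     (forall k : 'I_(2 * m), psd (Gmx Phi k q c x y)) /\
     (forall i : 'I_r, Hm_psd_ext m (sget (y i)) (al i) (be i))].

Definition cstar Phi m r q al be ell u Acons : \bar R :=
  ereal_sup [set c%:E | c in @feasible_c Phi m r q al be ell u Acons].

End Defs.

(* Main.v *)
Require Import Defs.
From HB Require Import structures.
From mathcomp Require Import all_boot all_order all_algebra.
From mathcomp Require Import boolp classical_sets reals constructive_ereal ereal.
From mathcomp Require Import ring lra zify.
Import Order.TTheory GRing.Theory Num.Theory.
Local Open Scope ring_scope.
Local Open Scope classical_set_scope.

Lemma sgetE (R : realType) n (s : 'I_n -> R) k (Hk : (k < n)%N) :
  sget s k = s (Ordinal Hk).
Proof. by rewrite /sget insubT. Qed.

Lemma RmxS_psd (R : realType) m (I : finType) (P : pred I) (w t : I -> R) :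
  (forall j, P j -> 0 <= w j) ->
  psd (Rmx m (fun k => \sum_(j | P j) w j * t j ^+ k)).
Proof.
move=> Hw; split.
  by apply/matrixP => i j; rewrite !mxE addnC.
move=> v.
have -> : (v^T *m Rmx m (fun k => \sum_(j | P j) w j * t j ^+ k) *m v) 0 0 =
   \sum_(j | P j) w j * (\sum_i v i 0 * t j ^+ i) ^+ 2.
  rewrite mxE.
  under eq_bigr do rewrite mxE big_distrl /=.
  under eq_bigr do under eq_bigr do rewrite !mxE /= big_distrr big_distrl /=.
  rewrite exchange_big /=.
  under [RHS]eq_bigr do rewrite expr2 big_distrl /= big_distrr /=.
  under eq_bigr do rewrite exchange_big /=.
  rewrite exchange_big /=.
  apply: eq_bigr => l _; apply: eq_bigr => j _.
  rewrite mulr_sumr big_distrr /=.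
  apply: eq_bigr => i _; rewrite exprD; ring.
apply: sumr_ge0 => j Pj; apply: mulr_ge0; [exact: Hw | exact: sqr_ge0].
Qed.

Lemma psd_block (R : realType) n1 n2 (A : 'M[R]_n1) (B : 'M[R]_n2) :
  psd A -> psd B -> psd (block_mx A 0 0 B).
Proof.
move=> [At Aq] [Bt Bq]; split; first by rewrite tr_block_mx At Bt !trmx0.
move=> v; rewrite -[v]vsubmxK tr_col_mx mul_row_block !mulmx0 addr0 add0r.
rewrite mul_row_col mxE; apply: addr_ge0; [exact: Aq | exact: Bq].
Qed.

Lemma Rmx_psd (R : realType) m (s : nat -> R) (I : finType) (P : pred I) (w t : I -> R) :
  (forall k, (k.+1 < 2 * m)%N -> s k = \sum_(j | P j) w j * t j ^+ k) ->
  (forall j, P j -> 0 <= w j) -> psd (Rmx m s).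
Proof.
move=> Hs Hw.
have -> : Rmx m s = Rmx m (fun k => \sum_(j | P j) w j * t j ^+ k).
  apply/matrixP => i j; rewrite !mxE; apply: Hs.
  have := ltn_ord i; have := ltn_ord j; lia.
exact: RmxS_psd.
Qed.

Lemma Fplus_psd (R : realType) m (s : nat -> R) (I : finType) (P : pred I) (w t : I -> R) al :
  (forall k, (k < 2 * m)%N -> s k = \sum_(j | P j) w j * t j ^+ k) ->
  (forall j, P j -> 0 <= w j) -> (forall j, P j -> al <= t j) -> psd (Fplus m s al).
Proof.
move=> Hs Hw Ht.
apply: (@Rmx_psd R m (fun k => s k.+1 - al * s k) I P (fun j => w j * (t j - al)) t).
  move=> k Hk; rewrite !Hs //; last by lia.
  rewrite mulr_sumr -sumrB; apply: eq_bigr => j _; rewrite exprS; ring.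
move=> j Pj; apply: mulr_ge0; first exact: Hw.
by rewrite subr_ge0; apply: Ht.
Qed.

Lemma Fminus_psd (R : realType) m (s : nat -> R) (I : finType) (P : pred I) (w t : I -> R) be :
  (forall k, (k < 2 * m)%N -> s k = \sum_(j | P j) w j * t j ^+ k) ->
  (forall j, P j -> 0 <= w j) -> (forall j, P j -> t j <= be) -> psd (Fminus m s be).
Proof.
move=> Hs Hw Ht.
apply: (@Rmx_psd R m (fun k => be * s k - s k.+1) I P (fun j => w j * (be - t j)) t).
  move=> k Hk; rewrite !Hs //; last by lia.
  rewrite mulr_sumr -sumrB; apply: eq_bigr => j _; rewrite exprS; ring.
move=> j Pj; apply: mulr_ge0; first exact: Hw.
by rewrite subr_ge0; apply: Ht.
Qed.

Lemma psd_conj (R : realType) n p (P : 'M[R]_n) (B : 'M[R]_(n, p)) :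
  psd P -> psd (B^T *m P *m B).
Proof.
move=> [Pt Pq]; split; first by rewrite !trmx_mul trmxK Pt mulmxA.
move=> v; have := Pq (B *m v).
by rewrite trmx_mul !mulmxA.
Qed.

Lemma u_mono (R : realType) (ell : nat) (u : nat -> R)
  (Hu : forall i, (i < ell)%N -> u i < u i.+1) :
  forall i j, (i <= j)%N -> (j <= ell)%N -> u i <= u j.
Proof.
move=> i j; elim: j => [|j IH]; first by rewrite leqn0 => /eqP ->.
rewrite leq_eqVlt => /orP [/eqP -> //|Hij] Hj.
apply: le_trans (IH Hij (ltnW Hj)) _; exact/ltW/Hu.
Qed.

Lemma piece_unique (R : realType) (ell : nat) (u : nat -> R) (a b : R)
  (Hab : a < b) (Hu0 : u 0%N = a) (Hul : u ell = b)
  (Hu : forall i, (i < ell)%N -> u i < u i.+1) (t : R) :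
  a <= t <= b -> exists i0 : 'I_ell, forall i : 'I_ell, in_piece ell u i t = (i == i0).
Proof.
move=> /andP [Hat Htb].
have ell0 : (0 < ell)%N.
  case: ell Hul Hu => [|//] Hul _; move: Hab; rewrite -Hu0 Hul; by rewrite ltxx.
pose i00 := Ordinal ell0.
have P0 : [pred i : 'I_ell | u i <= t] i00 by rewrite /= Hu0.
case: (@arg_maxnP _ i00 [pred i : 'I_ell | u i <= t] (fun i : 'I_ell => i : nat) P0) => i0 Hi0 Hmax.
have Hin : in_piece ell u i0 t.
  move: Hi0; rewrite /= => Hi0; rewrite /in_piece Hi0 /=; case: ifP => Hlt.
    rewrite ltNge; apply/negP => Hc.
    have := Hmax (Ordinal Hlt) Hc; rewrite /=; lia.
  have -> : i0.+1 = ell by have := ltn_ord i0; lia.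
  by rewrite Hul.
exists i0 => i; apply/idP/eqP; last by move=> ->.
have key : forall j1 j2 : 'I_ell, (j1 < j2)%N -> in_piece ell u j1 t -> ~~ in_piece ell u j2 t.
  move=> j1 j2 H12; rewrite /in_piece.
  have H1 : (j1.+1 < ell)%N by have := ltn_ord j2; lia.
  rewrite H1 => /andP [_ Ht1]; apply/negP.
  have Hm : u j1.+1 <= u j2 := @u_mono _ _ _ Hu _ _ H12 (ltnW (ltn_ord j2)).
  case: ifP => _ /andP [Hj2 _]; move: (le_trans Hm Hj2); by rewrite leNgt Ht1.
move=> Hi; case: (ltngtP i i0) => H.
- by move: (key _ _ H Hi); rewrite Hin.
- by move: (key _ _ H Hin); rewrite Hi.
- exact: val_inj.
Qed.
Theorem theorem7p2 (R : realType) (M : Type) (tau : M -> M -> R) (tau0 : R)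
  (Phi : nat -> {poly R})
  (Htpt : two_point_homogeneous tau)
  (Hsym : forall x y, tau x y = tau y x)
  (Htau0 : forall x, tau x x = tau0)
  (Hdeg : forall k, size (Phi k) = k.+1)
  (Hnorm : forall k, (Phi k).[tau0] = 1)
  (Hpd : forall (k N : nat) (z : 'I_N -> M),
           psd (\matrix_(i < N, j < N) (Phi k).[tau (z i) (z j)]))
  (a b : R) (Hab : a < b) (m : nat) (Hm : (0 < m)%N)
  (r : nat) (q : 'I_r -> M) (al be : 'I_r -> \bar R)
  (Halbe : forall i, (al i <= be i)%E)
  (Pi : set M) (HPi : Pi `<=` Pi1 tau q al be)
  (ell : nat) (u : nat -> R) (Hu0 : u 0%N = a) (Hul : u ell = b)
  (Hu : forall i, (i < ell)%N -> u i < u i.+1)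
  (Acons : R -> ('I_ell -> 'I_(2 * m) -> R) -> Prop)
  (HA : forall (N : nat) (z : 'I_N -> M), Scode_in tau a b Pi z ->
          Acons N%:R (@xmom R M tau ell u N z (2 * m)))
  : (Acode tau a b Pi <= @cstar R M tau Phi m r q al be ell u Acons)%E.
Proof.
Proof.
apply: ge_ereal_sup => _ [N [z Hz] <-].
apply: ereal_sup_ubound => /=.
exists N%:R => //.
case: Hz => Hinj [HzPi HzS].
have m2 : (0 < 2 * m)%N by lia.
have Hsz : forall k, (size (Phi k) <= k.+1)%N by move=> k; rewrite Hdeg.
pose y := fun (i : 'I_r) (d : 'I_(2 * m)) => \sum_(p < N) tau (z p) (q i) ^+ d.
have Hx : forall i d, (d < 2 * m)%N -> sget (@xmom R M tau ell u N z (2 * m) i) d =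
   \sum_(j : 'I_N * 'I_N | (j.1 != j.2) && in_piece ell u i (tau (z j.1) (z j.2)))
       1 * tau (z j.1) (z j.2) ^+ d.
  move=> i d Hd; rewrite (@sgetE _ _ _ _ Hd) /xmom pair_big_dep /=.
  by apply: eq_bigr => j _; rewrite mul1r.
have Hy : forall i d, (d < 2 * m)%N -> sget (y i) d =
   \sum_(p | predT p) 1 * tau (z p) (q i) ^+ d.
  move=> i d Hd; rewrite (@sgetE _ _ _ _ Hd) /y.
  by apply: eq_bigr => j _; rewrite mul1r.
have Hpart : forall (p p' : 'I_N), p != p' -> forall F : R,
    \sum_(i' < ell | in_piece ell u i' (tau (z p) (z p'))) F = F.
  move=> p p' H F; case: (HzS p p' H) => _ Hab'.
  have [i0 Hi0] := @piece_unique _ _ _ _ _ Hab Hu0 Hul Hu _ Hab'.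
  by rewrite (eq_bigl (pred1 i0)) ?big_pred1_eq // => i; exact: Hi0.
exists (@xmom R M tau ell u N z (2 * m)), y.
split.
  move=> i; rewrite (@sgetE _ _ _ _ m2) /y /=.
  by rewrite (eq_bigr (fun=> 1)) ?sumr_const ?card_ord // => p _; rewrite expr0.
split.
  move=> i; rewrite /Hmx.
  have Hs := Hx i.
  have Hw : forall j : 'I_N * 'I_N,
      (j.1 != j.2) && in_piece ell u i (tau (z j.1) (z j.2)) -> 0 <= (1 : R).
    by move=> *; exact: ler01.
  apply: psd_block.
    by apply: (@Rmx_psd _ _ _ _ _ _ _ _ Hw) => k Hk; apply: Hs; lia.
  apply: psd_block.
    apply: (@Fplus_psd _ _ _ _ _ _ _ _ Hs Hw) => j /andP [_]; rewrite /in_piece.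
    by case: ifP => _ /andP [].
  apply: (@Fminus_psd _ _ _ _ _ _ _ _ Hs Hw) => j /andP [_]; rewrite /in_piece.
  by case: ifP => _ /andP [_ H] //; apply: ltW.
split; first exact: HA.
split.
  move=> k.
  pose zz := fun i : 'I_(r + N) => match split i with inl i => q i | inr p => z p end.
  pose Q := \matrix_(i, j) (Phi k).[tau (zz i) (zz j)].
  pose B : 'M[R]_(r + N, r + 1) := block_mx 1%:M 0 0 (const_mx 1).
  have -> : Gmx tau Phi k q N%:R (@xmom R M tau ell u N z (2 * m)) y = B^T *m Q *m B.
    rewrite -[Q]submxK /B tr_block_mx !mulmx_block !trmx0 !trmx1 !mul1mx !mul0mx !mulmx1 !mulmx0 !addr0 !add0r.
    rewrite /Gmx; congr block_mx.
    - apply/matrixP => i j; rewrite !mxE /zz.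
      by rewrite (unsplitK (inl _ i)) (unsplitK (inl _ j)).
    - apply/matrixP => i j; rewrite !mxE.
      transitivity (\sum_(d < k.+1) \sum_p (Phi k)`_d * tau (z p) (q i) ^+ d).
        apply: eq_bigr => d _; rewrite Hy; last by have := ltn_ord k; have := ltn_ord d; lia.
        by rewrite mulr_sumr; apply: eq_bigr => p _; rewrite mul1r.
      rewrite exchange_big; apply: eq_bigr => p _.
      rewrite !mxE /zz (unsplitK (inl _ i)) (unsplitK (inr _ p)) mulr1 Hsym.
      by rewrite (horner_coef_wide _ (Hsz k)).
    - apply/matrixP => i j; rewrite !mxE.
      transitivity (\sum_(d < k.+1) \sum_p (Phi k)`_d * tau (z p) (q j) ^+ d).
        apply: eq_bigr => d _; rewrite Hy; last by have := ltn_ord k; have := ltn_ord d; lia.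
        by rewrite mulr_sumr; apply: eq_bigr => p _; rewrite mul1r.
      rewrite exchange_big; apply: eq_bigr => p _.
      rewrite !mxE /zz (unsplitK (inl _ j)) (unsplitK (inr _ p)) mul1r.
      by rewrite (horner_coef_wide _ (Hsz k)).
    - apply/matrixP => i j; rewrite !mxE.
      transitivity (N%:R + \sum_p \sum_(p' | p != p') (Phi k).[tau (z p) (z p')]).
        congr (_ + _).
        transitivity (\sum_(d < k.+1) \sum_p \sum_(p' | p != p') (Phi k)`_d * tau (z p) (z p') ^+ d).
          apply: eq_bigr => d _.
          have Hd : (d < 2 * m)%N by have := ltn_ord k; have := ltn_ord d; lia.
          have E : \sum_(i' < ell) sget (@xmom R M tau ell u N z (2 * m) i') d =
                   \sum_p \sum_(p' | p != p') tau (z p) (z p') ^+ d.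
            transitivity (\sum_(i' < ell) \sum_p \sum_(p' | (p != p') && in_piece ell u i' (tau (z p) (z p'))) tau (z p) (z p') ^+ d).
              by apply: eq_bigr => i' _; rewrite (@sgetE _ _ _ _ Hd) /xmom.
            rewrite exchange_big; apply: eq_bigr => p _.
            under eq_bigr do rewrite big_mkcondr.
            rewrite exchange_big /=; apply: eq_bigr => p' Hp'.
            rewrite -big_mkcond /=; exact: Hpart.
          rewrite E mulr_sumr; apply: eq_bigr => p _; by rewrite mulr_sumr.
        rewrite exchange_big; apply: eq_bigr => p _; rewrite exchange_big.
        by apply: eq_bigr => p' _; rewrite (horner_coef_wide _ (Hsz k)).
      symmetry.
      transitivity (\sum_p' \sum_p (Phi k).[tau (z p) (z p')]).
        apply: eq_bigr => p' _; rewrite !mxE mulr1; apply: eq_bigr => p _.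
        by rewrite !mxE /zz (unsplitK (inr _ p)) (unsplitK (inr _ p')) mul1r.
      rewrite exchange_big /=.
      transitivity (\sum_(p < N) (1 + \sum_(p' | p != p') (Phi k).[tau (z p) (z p')])).
        apply: eq_bigr => p _; rewrite (bigD1 p) //= Htau0 Hnorm; congr (_ + _).
        by apply: eq_bigl => p'; rewrite eq_sym.
      by rewrite big_split /= sumr_const card_ord.
  exact: (@psd_conj _ _ _ _ _ (Hpd k _ zz)).
move=> i.
have Hs := Hy i.
have Hw : forall p : 'I_N, predT p -> 0 <= (1 : R) by move=> *; exact: ler01.
have HR : psd (Rmx m (sget (y i))).
  by apply: (@Rmx_psd _ _ _ _ _ _ _ _ Hw) => k Hk; apply: Hs; lia.
have Hal : forall x, al i = x%:E -> forall p : 'I_N, predT p -> x <= tau (z p) (q i).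
  move=> x Ex p _; have := (HPi _ (HzPi p) i).1; by rewrite Ex lee_fin.
have Hbe : forall x, be i = x%:E -> forall p : 'I_N, predT p -> tau (z p) (q i) <= x.
  move=> x Ex p _; have := (HPi _ (HzPi p) i).2; by rewrite Ex lee_fin.
rewrite /Hm_psd_ext.
case Ea: (al i) => [x| |]; case Eb: (be i) => [x'| |] //;
  rewrite /Hmx; repeat apply: psd_block => //.
all: try apply: (@Fplus_psd _ _ _ _ _ _ _ _ Hs Hw (Hal _ Ea)).
all: try apply: (@Fminus_psd _ _ _ _ _ _ _ _ Hs Hw (Hbe _ Eb)).
Qed.
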